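(* Let $q$ be a prime power, $n\ge 2$, and let $\mathcal{F}=(\mathcal{F}_1,\ldots,\mathcal{F}_r)$ be a flag of type $(t_1,\ldots,t_r)$ on $\mathbb{F}_{q^n}$. Let $\beta\in\mathbb{F}_{q^n}^*$. Then $|\mathrm{Orb}_{\beta}(\mathcal{F}_i)|$ divides $|\mathrm{Orb}_{\beta}(\mathcal{F})|$ for every $1\le i\le r$. In particular, $$\mathrm{lcm}\left\{ |\beta^{q^{t_i}-1}| \ : \ 1\le i\le r\right\} \text{ divides } |\mathrm{Orb}_{\beta}(\mathcal{F})|.$$
   Context: $\mathbb{F}_{q^n}$ is regarded as an $n$-dimensional $\mathbb{F}_q$-vector space. A flag of type $(t_1,\ldots,t_r)$ on $\mathbb{F}_{q^n}$ is a sequence $\mathcal{F}=(\mathcal{F}_1,\ldots,\mathcal{F}_r)$ of $\mathbb{F}_q$-subspaces with $\{0\}\subsetneq\mathcal{F}_1\subsetneq\cdots\subsetneq\mathcal{F}_r\subsetneq\mathbb{F}_{q^n}$ and $\dim_{\mathbb{F}_q}\mathcal{F}_i=t_i$. For $\beta\in\mathbb{F}_{q^n}^*$, $|\beta|$ denotes its multiplicative order; for an $\mathbb{F}_q$-subspace $\mathcal{U}$, $\mathcal{U}\beta=\{u\beta: u\in\mathcal{U}\}$ and $\mathcal{F}\beta=(\mathcal{F}_1\beta,\ldots,\mathcal{F}_r\beta)$. The $\beta$-cyclic orbit codes are $\mathrm{Orb}_\beta(\mathcal{U})=\{\mathcal{U}\beta^j: 0\le j\le|\beta|-1\}$ and $\mathrm{Orb}_\beta(\mathcal{F})=\{\mathcal{F}\beta^j: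 0\le j\le |\beta|-1\}$ (as sets). *)

(* Defs.v *)
(* F_q is a finite field F (q = #|F|), F_{q^n} is a field
   extension L : fieldExtType F with n = \dim {:L}; F_q-subspaces of F_{q^n}
   are {vspace L}. Elements of F_{q^n}^* are units u : {unit (finvect_type L)},
   whose multiplicative order is the group order #[u]%g. *)
From mathcomp Require Import all_boot all_order all_algebra all_fingroup all_field.
Set Implicit Arguments. Unset Strict Implicit. Unset Printing Implicit Defensive.
Import GRing.Theory.
Local Open Scope ring_scope.

Section Defs.
Variables (F : finFieldType) (L : fieldExtType F).

Definition vsmul (U : {vspace L}) (b : L) : {vspace L} := (amulr b @: U)%VS.

Definition is_flag (r : nat) (Fl : 'I_r -> {vspace L}) (t : 'I_r -> nat) : Prop :=
  [/\ forall i, \dim (Fl i) = t i,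
      forall i, Fl i != 0%VS,
      forall i, Fl i != fullv &
      forall i j : 'I_r, (i < j)%N -> (Fl i <= Fl j)%VS /\ Fl i != Fl j].

Definition flagmul (r : nat) (Fl : 'I_r -> {vspace L}) (b : L)
  : {ffun 'I_r -> {vspace L}} := [ffun i => vsmul (Fl i) b].

(* Orb_beta(U) = { U beta^j : 0 <= j <= |beta| - 1 } as a list; its
   cardinality (as a set) is the size of the duplicate-free list. *)
Definition orb_space (U : {vspace L}) (u : {unit (finvect_type L)}) : seq {vspace L} :=
  [seq vsmul U ((val u : L) ^+ j) | j <- iota 0 #[u]%g].

Definition orb_flag (r : nat) (Fl : 'I_r -> {vspace L}) (u : {unit (finvect_type L)})
  : seq {ffun 'I_r -> {vspace L}} :=
  [seq flagmul Fl ((val u : L) ^+ j) | j <- iota 0 #[u]%g].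

Definition card_orb_space U u : nat := size (undup (orb_space U u)).
Definition card_orb_flag r Fl u : nat := size (undup (@orb_flag r Fl u)).

End Defs.

(* Main.v *)
Require Import Defs.
From mathcomp Require Import all_boot all_order all_algebra all_fingroup all_field.
From mathcomp Require Import cyclic.
Set Implicit Arguments. Unset Strict Implicit. Unset Printing Implicit Defensive.
Import GRing.Theory FinRing.Theory.
Local Open Scope ring_scope.
Section Period.
Variables (T : eqType) (f : nat -> T) (N : nat).
Hypotheses (N_gt0 : (0 < N)%N) (fN : f N = f 0)
  (shift : forall i j k, f (i + k)%N = f (j + k)%N <-> f i = f j).

Lemma period_ex : exists d, [/\ (0 < d)%N,
  size (undup [seq f j | j <- iota 0 N]) = d &
  forall i j, f i = f j <-> i = j %[mod d]].
Proof.
have exP : exists p, (0 < p)%N && (f p == f 0) by exists N; rewrite N_gt0 fN eqxx.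
case: (ex_minnP exP) => d /andP[d_gt0 /eqP fd] dmin.
have dN : (d <= N)%N by apply: dmin; rewrite N_gt0 fN eqxx.
have fmd : forall m r, f (m * d + r)%N = f r.
  elim=> [|m IH] r; first by [].
  rewrite mulSn -addnA -[in RHS]IH.
  by have := proj2 (shift d 0 (m * d + r)) fd; rewrite add0n.
have fmod : forall i, f (i %% d)%N = f i.
  by move=> i; rewrite {2}(divn_eq i d) fmd.
have inj : forall a b, (a < d)%N -> (b < d)%N -> f a = f b -> a = b.
  have key : forall a b, (a <= b)%N -> (b < d)%N -> f a = f b -> a = b.
    move=> a b ab bd fab.
    have : f (b - a)%N = f 0.
      have := proj1 (shift (b - a) 0 a); rewrite subnK // add0n; by apply.
    case: (posnP (b - a)) => [ba0|pos] h.
      by apply/eqP; rewrite eqn_leq ab -subn_eq0 ba0.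
    move/eqP: h => h.
    have := dmin (b - a)%N; rewrite pos h => /(_ isT).
    rewrite leqNgt; move/negP; case.
    by apply: leq_ltn_trans (leq_subr _ _) bd.
  move=> a b ad bd fab; case: (leqP a b) => ab; first exact: key.
  by apply/esym/key => //; apply: ltnW.
have feq : forall i j, f i = f j <-> i = j %[mod d].
  move=> i j; split=> [h|h].
    by apply: inj; rewrite ?ltn_pmod // !fmod.
  by rewrite -fmod h fmod.
exists d; split => //.
have -> : size (undup [seq f j | j <- iota 0 N]) = size [seq f j | j <- iota 0 d].
  apply: perm_size; apply: uniq_perm; rewrite ?undup_uniq //.
    rewrite map_inj_in_uniq ?iota_uniq // => a b; rewrite !mem_iota /= !add0n.
    exact: inj.
  move=> x; rewrite mem_undup; apply/mapP/mapP => [[j _ ->]|[j]].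
    exists (j %% d)%N; last by rewrite fmod.
    by rewrite mem_iota add0n ltn_pmod.
  rewrite mem_iota add0n /= => jd ->; exists j => //.
  by rewrite mem_iota add0n /= (leq_trans jd dN).
by rewrite size_map size_iota.
Qed.
End Period.
Section Grp.
Local Open Scope group_scope.
Lemma my_part (gT : finGroupType) (G : {set gT}) (H : {group gT}) :
  partition (rcosets H G) (H * G).
Proof.
set HG := H * G; have sGHG: {subset G <= HG} by apply/subsetP/mulG_subr.
have defHx x: x \in HG -> [set y in HG | rcoset H x == rcoset H y] = H :* x.
  move=> HGx; apply/setP=> y; rewrite inE !rcosetE (sameP eqP rcoset_eqP).
  by rewrite rcoset_sym; apply/andb_idl/subsetP; rewrite mulGS sub1set.
have:= preim_partitionP (rcoset H) HG; congr (partition _ _); apply/setP=> Hx.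
apply/imsetP/idP=> [[x HGx ->] | ]; first by rewrite defHx // mem_rcosets.
by case/rcosetsP=> x /sGHG-HGx ->; exists x; rewrite ?defHx.
Qed.

Lemma my_dvd (gT : finGroupType) (G : {set gT}) (H : {group gT}) :
  (#|H| %| #|(H * G)%g|)%N.
Proof.
rewrite (@card_uniform_partition _ #|H| _ _ _ (my_part G H)) ?dvdn_mull //.
by move=> _ /rcosetsP[x _ ->]; rewrite card_rcoset.
Qed.

End Grp.
Section Field.
Variables (F : finFieldType) (L : fieldExtType F).

Lemma vsmulM (U : {vspace L}) x y : vsmul U (x * y) = vsmul (vsmul U x) y.
Proof.
rewrite /vsmul -limg_comp; congr (_ @: _)%VS; apply/lfunP => v.
by rewrite comp_lfunE !lfunE /= mulrA.
Qed.

Lemma vsmul1 (U : {vspace L}) : vsmul U 1 = U.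
Proof.
rewrite /vsmul -[RHS]lim1g; congr (_ @: _)%VS; apply/lfunP => v.
by rewrite !lfunE /= mulr1.
Qed.

Lemma vsmul_inj (U V : {vspace L}) x : x != 0 -> vsmul U x = vsmul V x -> U = V.
Proof.
by move=> x0 h; rewrite -(vsmul1 U) -(divff x0) vsmulM h -vsmulM divff // vsmul1.
Qed.

Lemma card_units_in (U : {vspace L}) :
  #|[set v : {unit (finvect_type L)} | (val v : L) \in U]| = (#|F| ^ \dim U).-1.
Proof.
have cU : #|[set x : finvect_type L | (x : L) \in U]| = (#|F| ^ \dim U)%N.
  rewrite -(@card_vspace F (finvect_type L) _ U); apply: eq_card => x.
  by rewrite inE.
rewrite -cU.
have -> : [set x : finvect_type L | (x : L) \in U] =
   0 |: (val @: [set v : {unit (finvect_type L)} | (val v : L) \in U]).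
  apply/setP => x; rewrite !inE; case: (eqVneq x 0) => [->|x0] /=.
    by rewrite mem0v.
  apply/idP/imsetP => [xU|[v]]; last by rewrite inE => vU ->.
  have xu : x \is a GRing.unit by rewrite unitfE.
  by exists (FinRing.unit _ xu); rewrite ?inE.
rewrite cardsU1 card_imset; last exact: val_inj.
have -> : (0 : finvect_type L) \notin
   (val @: [set v : {unit (finvect_type L)} | (val v : L) \in U]).
  by apply/imsetP => -[v _ v0]; have := valP v; rewrite /= -v0 unitr0.
by [].
Qed.

Lemma order_stab (U : {vspace L}) (g : {unit (finvect_type L)}) :
  vsmul U (val g : L) = U -> (#[g]%g %| (#|F| ^ \dim U).-1)%N.
Proof.
move=> hg.
have hk : forall k, vsmul U ((val g : L) ^+ k) = U.
  elim=> [|k IH]; first by rewrite expr0 vsmul1.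
  by rewrite exprSr vsmulM IH hg.
set A := [set v : {unit (finvect_type L)} | (val v : L) \in U].
have AH : (<[g]> * A = A)%g.
  apply/eqP; rewrite eqEsubset mulG_subr andbT.
  apply/subsetP => _ /mulsgP[h x /cycleP[k ->] xA ->].
  rewrite inE val_unitM val_unitX mulrC.
  move: xA; rewrite inE => xU.
  have := memv_img (amulr ((val g : L) ^+ k)) xU.
  by rewrite lfunE /= /vsmul in hk *; rewrite (hk k).
rewrite -card_units_in -/A -AH.
exact: my_dvd.
Qed.

End Field.

Theorem proposition3p5 (F : finFieldType) (L : fieldExtType F)
  (hn : (2 <= \dim {:L})%N)
  (r : nat) (Fl : 'I_r -> {vspace L}) (t : 'I_r -> nat)
  (hflag : is_flag Fl t)
  (u : {unit (finvect_type L)}) :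
  (forall i : 'I_r, (card_orb_space (Fl i) u %| card_orb_flag Fl u)%N) /\
  (\big[lcmn/1%N]_(i < r) #[u ^+ (#|F| ^ t i - 1)]%g %| card_orb_flag Fl u)%N.
Proof.
case: hflag => hdim _ _ _.
pose b := (val u : L).
have b0 : b != 0 by have := valP u; rewrite /b unitfE.
have bN : b ^+ #[u]%g = 1.
  have h := val_unitX #[u]%g u; rewrite expg_order in h; exact: (esym h).
have hU : forall U : {vspace L}, exists d, [/\ (0 < d)%N, card_orb_space U u = d &
    forall i j, vsmul U (b ^+ i) = vsmul U (b ^+ j) <-> i = j %[mod d]].
  move=> U; apply: (@period_ex _ (fun j => vsmul U (b ^+ j)) #[u]%g).
  - exact: order_gt0.
  - by rewrite /= bN expr0.
  move=> i j k /=; rewrite !exprD !vsmulM; split; last by move->.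
  exact: vsmul_inj (expf_neq0 _ b0).
have hF : exists d, [/\ (0 < d)%N, card_orb_flag Fl u = d &
    forall i j, flagmul Fl (b ^+ i) = flagmul Fl (b ^+ j) <-> i = j %[mod d]].
  apply: (@period_ex _ (fun j => flagmul Fl (b ^+ j)) #[u]%g).
  - exact: order_gt0.
  - by rewrite /= bN expr0.
  move=> i j k /=; split => [h|h]; apply/ffunP => l;
    move/ffunP/(_ l): h; rewrite !ffunE.
    rewrite !exprD !vsmulM; exact: vsmul_inj (expf_neq0 _ b0).
  by rewrite !exprD !vsmulM => ->.
have [dF [dF0 cF hdF]] := hF.
have fdF : flagmul Fl (b ^+ dF) = flagmul Fl (b ^+ 0) by apply/hdF; rewrite mod0n modnn.
have divi : forall i, exists di, [/\ card_orb_space (Fl i) u = di, (di %| dF)%N &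
    (#[u ^+ (#|F| ^ t i - 1)]%g %| di)%N].
  move=> i; have [di [di0 ci hdi]] := hU (Fl i).
  exists di; split => //.
    move/ffunP/(_ i): fdF; rewrite !ffunE => /hdi.
    by rewrite mod0n /dvdn => ->.
  rewrite order_dvdn -expgM mulnC expgM -order_dvdn subn1 -hdim.
  apply: order_stab; rewrite val_unitX -/b.
  have := proj2 (hdi di 0); rewrite mod0n modnn expr0 vsmul1; exact.
split.
  by move=> i; have [di [-> ? _]] := divi i; rewrite cF.
apply/dvdn_biglcmP => i _; have [di [_ h1 h2]] := divi i.
by rewrite cF; apply: dvdn_trans h2 h1.
Qed.
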